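(* Let $A>0$ (area of the subregion), $E_{\rm b}>0$ (battery capacity), $P_{\rm c}>0$ (on-board circuit power), $\lambda>0$, $S>0$, and suppose $h_{\rm n}^*\ge0$ minimizes $\Gamma$ on $[0,\infty)$. For $R>0$ and $h\ge0$ define the UAV recall frequency $$\Phi(R,h)=\frac{A}{\pi R^2}\cdot\frac{P_{\rm t}(R,\lambda,h,S)+P_{\rm c}}{E_{\rm b}}.$$ Then for all $R>0$, $h\ge 0$, $$\Phi(R,h)\ \ge\ \frac{2A}{\pi E_{\rm b}}\sqrt{\lambda(2^S-1)\,P_{\rm c}\,\Gamma(h_{\rm n}^* )},$$ and equality holds at $(R^*,h^* )$ with $$R^*=\sqrt[4]{\frac{P_{\rm c}}{\lambda(2^S-1)\,\Gamma(h_{\rm n}^* )}},\qquad h^*=R^*h_{\rm n}^*.$$ Consequently, for a region split into subregions $\beta=1,\dots,\kappa$ with parameters $A(\beta),\lambda(\beta)$ (and common $E_{\rm b},P_{\rm c},S$), the total $\sum_{\beta}\Phi_\beta(R(\beta),h(\beta))$ is minimized over $R(\beta)>0,h(\beta)\ge0$ by choosing $(R(\beta),h(\beta))=(R^*(\beta),R^*(\beta)h_{\rm n}^* )$ in each subregion, with $R^*(\beta)$ given by the formula above with $\lambda=\lambda(\beta)$.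
   Context: Fix constants $f_{\rm c}>0$, $c>0$, $N_0>0$, $\eta_0>0,\eta_1>0$, $a>0$, $b>0$. For $r>0$, $h\ge 0$, let $\theta(r,h)=\frac{180}{\pi}\arctan(h/r)$, $P_0(r,h)=\dfrac{1}{1+a\exp(-b[\theta(r,h)-a])}$, and $$\bar L(r,h)=\left(\frac{4\pi f_{\rm c}}{c}\right)^2 (r^2+h^2)\,\big(\eta_1+P_0(r,h)(\eta_0-\eta_1)\big).$$ For $R>0$, $\lambda>0$, $h\ge0$, $S>0$, the transmit power is $P_{\rm t}(R,\lambda,h,S)=\lambda\int_0^R 2\pi r\,\bar L(r,h)\,N_0\,(2^S-1)\,dr$, and the kernel function is $\Gamma(x):=P_{\rm t}(1,1,x,1)=\int_0^1 2\pi r\,\bar L(r,x)\,N_0\,dr$ for $x\ge0$. The number of UAVs covering a subregion of area $A$ with coverage radius $R$ is $A/(\pi R^2)$; $\Phi_\beta$ denotes $\Phi$ computed with the parameters $A(\beta),\lambda(\beta)$ of subregion $\beta$. *)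

(* Defs.v *)
From Stdlib Require Import Reals Lra ClassicalEpsilon.
Open Scope R_scope.

(* Riemann integral of f over [lo,hi] (lo <= hi); if f is not Riemann
   integrable there the value is unspecified (chosen by epsilon). *)
Definition Rint (f : R -> R) (lo hi : R) : R :=
  epsilon (inhabits 0)
    (fun v => exists pr : Riemann_integrable f lo hi, RiemannInt pr = v).

Definition theta (r h : R) : R := (180 / PI) * atan (h / r).

Definition P0 (a b : R) (r h : R) : R :=
  1 / (1 + a * exp (- b * (theta r h - a))).

Definition Lbar (fc c eta0 eta1 a b : R) (r h : R) : R :=
  (4 * PI * fc / c) ^ 2 * (r ^ 2 + h ^ 2)
  * (eta1 + P0 a b r h * (eta0 - eta1)).

Definition Pt (fc c N0 eta0 eta1 a b : R) (Rad lam h S : R) : R :=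
  lam * Rint (fun r => 2 * PI * r * Lbar fc c eta0 eta1 a b r h * N0
                       * (Rpower 2 S - 1)) 0 Rad.

Definition Gamma (fc c N0 eta0 eta1 a b : R) (x : R) : R :=
  Pt fc c N0 eta0 eta1 a b 1 1 x 1.

Definition Phi (fc c N0 eta0 eta1 a b : R) (A Eb Pc lam S : R) (Rad h : R) : R :=
  A / (PI * Rad ^ 2) * ((Pt fc c N0 eta0 eta1 a b Rad lam h S + Pc) / Eb).

Definition Rstar (fc c N0 eta0 eta1 a b : R) (Pc lam S hn : R) : R :=
  Rpower (Pc / (lam * (Rpower 2 S - 1) * Gamma fc c N0 eta0 eta1 a b hn)) (1/4).

Fixpoint rsum (f : nat -> R) (n : nat) : R :=
  match n with
  | O => 0
  | S m => rsum f m + f m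
  end.

(* Main.v *)
From Stdlib Require Import Reals Lra Lia ClassicalEpsilon FunctionalExtensionality.
From Coquelicot Require Import Coquelicot.
Require Import Defs.
Open Scope R_scope.

Definition Ff fc c N0 eta0 eta1 a b x r :=
  2*PI*r*Lbar fc c eta0 eta1 a b r x * N0.

Lemma P0_bnd a b r h : 0 < a -> 0 < P0 a b r h < 1.
Proof.
  intros Ha. unfold P0. assert (He := exp_pos (- b * (theta r h - a))).
  assert (0 < a * exp (- b * (theta r h - a))) by (apply Rmult_lt_0_compat; lra).
  split.
  - apply Rdiv_lt_0_compat; lra.
  - apply (Rmult_lt_reg_r (1 + a * exp (- b * (theta r h - a)))); [lra|].
    unfold Rdiv. rewrite Rmult_assoc, Rinv_l; lra.
Qed.

Lemma Q_bnd eta0 eta1 a b r h : 0 < a -> 0 < eta0 -> 0 < eta1 ->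
  0 < eta1 + P0 a b r h * (eta0 - eta1) <= eta0 + eta1.
Proof. intros Ha H0 H1. pose proof (P0_bnd a b r h Ha). nra. Qed.

Lemma Kpos fc c : 0 < fc -> 0 < c -> 0 < (4 * PI * fc / c) ^ 2.
Proof.
  intros. pose proof PI_RGT_0. apply pow_lt.
  apply Rdiv_lt_0_compat; [|lra]. nra.
Qed.

Lemma Ff_pos fc c N0 eta0 eta1 a b x r :
  0 < fc -> 0 < c -> 0 < N0 -> 0 < eta0 -> 0 < eta1 -> 0 < a -> 0 < r ->
  0 < Ff fc c N0 eta0 eta1 a b x r.
Proof.
  intros. unfold Ff, Lbar. pose proof (Kpos fc c H H0).
  pose proof (Q_bnd eta0 eta1 a b r x H4 H2 H3). pose proof PI_RGT_0.
  assert (0 < r^2) by (apply pow_lt; lra). assert (0 <= x^2) by apply pow2_ge_0.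
  assert (0 < r^2 + x^2) by lra.
  set (K := (4 * PI * fc / c) ^ 2) in *.
  set (Q := eta1 + P0 a b r x * (eta0 - eta1)) in *.
  remember PI as p. repeat apply Rmult_lt_0_compat; try lra; apply Rinv_0_lt_compat; lra.
Qed.

Lemma Ff_cont fc c N0 eta0 eta1 a b x r :
  0 < fc -> 0 < c -> 0 < N0 -> 0 < eta0 -> 0 < eta1 -> 0 < a ->
  continuous (Ff fc c N0 eta0 eta1 a b x) r.
Proof.
  intros Hfc Hc HN0 He0 He1 Ha.
  destruct (Req_dec r 0) as [Hr|Hr].
  - subst r. apply continuity_pt_filterlim.
    unfold continuity_pt, continue_in, limit1_in, limit_in.
    intros eps Heps.
    set (K := (4 * PI * fc / c) ^ 2).
    assert (HK : 0 < K) by (apply Kpos; auto).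
    pose proof PI_RGT_0.
    set (B := 2*PI*N0*K*(1+x^2)*(eta0+eta1)).
    assert (HB : 0 < B).
    { unfold B. assert (0 <= x^2) by apply pow2_ge_0.
      clearbody K. remember PI as p. repeat apply Rmult_lt_0_compat; lra. }
    assert (0 <= x^2) by apply pow2_ge_0.
    exists (Rmin 1 (eps / B)). split.
    + apply Rmin_pos; [lra| apply Rdiv_lt_0_compat; lra].
    + intros y [_ Hy]. simpl in *. unfold R_dist in *.
      rewrite Rminus_0_r in Hy.
      replace (Ff fc c N0 eta0 eta1 a b x 0) with 0 by (unfold Ff; ring).
      rewrite Rminus_0_r.
      assert (Hy1 : Rabs y < 1) by (eapply Rlt_le_trans; [exact Hy| apply Rmin_l]).
      assert (Hy2 : Rabs y < eps / B) by (eapply Rlt_le_trans; [exact Hy| apply Rmin_r]).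
      pose proof (Q_bnd eta0 eta1 a b y x Ha He0 He1) as HQ.
      set (Q := eta1 + P0 a b y x * (eta0 - eta1)) in *.
      replace (Ff fc c N0 eta0 eta1 a b x y) with ((2*PI*N0*K) * y * ((y^2+x^2) * Q))
        by (unfold Ff, Lbar, K, Q; ring).
      assert (Hy0 : 0 <= Rabs y) by apply Rabs_pos.
      assert (y^2 <= 1).
      { replace (y^2) with (Rabs y * Rabs y). nra.
        rewrite <- Rabs_mult. rewrite Rabs_pos_eq; [ring| nra]. }
      assert (HBd : B = 2*PI*N0*K*(1+x^2)*(eta0+eta1)) by reflexivity.
      clearbody K Q B. remember PI as p. assert (0 <= y^2) by apply pow2_ge_0.
      rewrite Rabs_mult, Rabs_mult.
      rewrite (Rabs_pos_eq (2*p*N0*K)) by (repeat apply Rmult_le_pos; lra).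
      rewrite (Rabs_pos_eq ((y^2+x^2)*Q)) by (apply Rmult_le_pos; nra).
      assert ((y^2+x^2)*Q <= (1+x^2)*(eta0+eta1)) by (apply Rmult_le_compat; nra).
      assert (2*p*N0*K * Rabs y * ((y^2+x^2)*Q) <= B * Rabs y).
      { rewrite HBd. assert (0 <= 2*p*N0*K * Rabs y) by (repeat apply Rmult_le_pos; lra).
        replace (2 * p * N0 * K * (1 + x ^ 2) * (eta0 + eta1) * Rabs y)
          with (2*p*N0*K * Rabs y * ((1+x^2)*(eta0+eta1))) by ring.
        apply Rmult_le_compat_l; auto. }
      assert (B * Rabs y < eps).
      { apply (Rmult_lt_compat_l B) in Hy2; auto.
        replace (B * (eps / B)) with eps in Hy2 by (field; lra). exact Hy2. }
      lra.
  - apply (ex_derive_continuous (V:=R_CompleteNormedModule)).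
    unfold Ff, Lbar, P0, theta. auto_derive.
    repeat split; auto.
    pose proof (exp_pos (- b * (180 / PI * atan (x * / r) + - a))). nra.
Qed.

Lemma Rint_RInt f lo hi : ex_RInt f lo hi -> Rint f lo hi = RInt f lo hi.
Proof.
  intros H. pose proof (ex_RInt_Reals_0 f lo hi H) as pr.
  unfold Rint.
  assert (E : exists v, exists pr : Riemann_integrable f lo hi, RiemannInt pr = v)
    by (exists (RiemannInt pr); exists pr; reflexivity).
  destruct (epsilon_spec (inhabits 0) _ E) as [pr' Hpr'].
  rewrite <- Hpr'. rewrite (RInt_Reals f lo hi pr'). reflexivity.
Qed.

Lemma Ff_scale fc c N0 eta0 eta1 a b h Rad y : 0 < a -> 0 < c -> Rad <> 0 ->
  Ff fc c N0 eta0 eta1 a b h (Rad*y) = Rad^3 * Ff fc c N0 eta0 eta1 a b (h/Rad) y.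
Proof.
  intros Ha Hc HR. unfold Ff, Lbar, P0.
  replace (theta (Rad*y) h) with (theta y (h/Rad)).
  - field. split; [|split]; auto.
    + pose proof (exp_pos (- b * (theta y (h / Rad) - a))). nra.
    + lra.
  - unfold theta. replace (h/(Rad*y)) with (h/Rad/y); [reflexivity|]. unfold Rdiv. rewrite Rinv_mult. ring.
Qed.

Lemma exF fc c N0 eta0 eta1 a b x k lo hi :
  0 < fc -> 0 < c -> 0 < N0 -> 0 < eta0 -> 0 < eta1 -> 0 < a ->
  ex_RInt (fun r => Ff fc c N0 eta0 eta1 a b x r * k) lo hi.
Proof.
  intros. apply (ex_RInt_continuous (V:=R_CompleteNormedModule)). intros z _.
  apply (continuous_mult (fun r => Ff fc c N0 eta0 eta1 a b x r) (fun _ => k)).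
  - apply Ff_cont; auto.
  - apply continuous_const.
Qed.

Lemma Gamma_eq fc c N0 eta0 eta1 a b x :
  0 < fc -> 0 < c -> 0 < N0 -> 0 < eta0 -> 0 < eta1 -> 0 < a ->
  Gamma fc c N0 eta0 eta1 a b x = RInt (Ff fc c N0 eta0 eta1 a b x) 0 1.
Proof.
  intros. unfold Gamma, Pt.
  change (fun r => 2 * PI * r * Lbar fc c eta0 eta1 a b r x * N0 * (Rpower 2 1 - 1))
    with (fun r => Ff fc c N0 eta0 eta1 a b x r * (Rpower 2 1 - 1)).
  rewrite Rint_RInt by (apply exF; auto).
  rewrite Rpower_1 by lra. rewrite Rmult_1_l.
  apply RInt_ext. intros. simpl. ring.
Qed.

Lemma Pt_scale fc c N0 eta0 eta1 a b Rad lam h S :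
  0 < fc -> 0 < c -> 0 < N0 -> 0 < eta0 -> 0 < eta1 -> 0 < a -> 0 < Rad ->
  Pt fc c N0 eta0 eta1 a b Rad lam h S
  = lam * (Rpower 2 S - 1) * Rad^4 * Gamma fc c N0 eta0 eta1 a b (h/Rad).
Proof.
  intros. rewrite Gamma_eq by auto. unfold Pt.
  set (k := Rpower 2 S - 1).
  change (fun r => 2 * PI * r * Lbar fc c eta0 eta1 a b r h * N0 * k)
    with (fun r => Ff fc c N0 eta0 eta1 a b h r * k).
  rewrite Rint_RInt by (apply exF; auto).
  assert (E := RInt_comp_lin (fun r => Ff fc c N0 eta0 eta1 a b h r * k) Rad 0 0 1
                 (exF _ _ _ _ _ _ _ _ _ _ _ H H0 H1 H2 H3 H4)).
  replace (Rad*0+0) with 0 in E by ring. replace (Rad*1+0) with Rad in E by ring.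
  rewrite <- E.
  assert (Hex : ex_RInt (Ff fc c N0 eta0 eta1 a b (h/Rad)) 0 1).
  { apply (ex_RInt_continuous (V:=R_CompleteNormedModule)). intros z _. apply Ff_cont; auto. }
  assert (Hs := RInt_scal (V:=R_CompleteNormedModule) _ 0 1 (Rad^4*k) Hex).
  assert (Hs' : RInt (fun y => (Rad^4*k) * Ff fc c N0 eta0 eta1 a b (h/Rad) y) 0 1
     = (Rad^4*k) * RInt (Ff fc c N0 eta0 eta1 a b (h/Rad)) 0 1) by exact Hs.
  rewrite (RInt_ext _ (fun y => (Rad^4*k) * (Ff fc c N0 eta0 eta1 a b (h/Rad) y))).
  - rewrite Hs'. ring.
  - intros y _. change (Rad * (Ff fc c N0 eta0 eta1 a b h (Rad*y+0) * k)
                      = (Rad^4*k) * Ff fc c N0 eta0 eta1 a b (h/Rad) y).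
    rewrite Rplus_0_r, Ff_scale by (auto; lra). ring.
Qed.

Lemma single
  (fc c N0 eta0 eta1 a b : R)
  (Hfc : 0 < fc) (Hc : 0 < c) (HN0 : 0 < N0) (Heta0 : 0 < eta0)
  (Heta1 : 0 < eta1) (Ha : 0 < a) (Hb : 0 < b)
  (Eb Pc S hn : R)
  (HEb : 0 < Eb) (HPc : 0 < Pc) (HS : 0 < S) (Hhn : 0 <= hn)
  (Hmin : forall x, 0 <= x ->
     Gamma fc c N0 eta0 eta1 a b hn <= Gamma fc c N0 eta0 eta1 a b x) :
  (forall A lam, 0 < A -> 0 < lam ->
     (forall Rad h, 0 < Rad -> 0 <= h ->
        Phi fc c N0 eta0 eta1 a b A Eb Pc lam S Rad h
        >= 2 * A / (PI * Eb)
           * sqrt (lam * (Rpower 2 S - 1) * Pc * Gamma fc c N0 eta0 eta1 a b hn))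
     /\
     Phi fc c N0 eta0 eta1 a b A Eb Pc lam S
         (Rstar fc c N0 eta0 eta1 a b Pc lam S hn)
         (Rstar fc c N0 eta0 eta1 a b Pc lam S hn * hn)
     = 2 * A / (PI * Eb)
       * sqrt (lam * (Rpower 2 S - 1) * Pc * Gamma fc c N0 eta0 eta1 a b hn)).
Proof.
  intros A lam HA Hlam.
  assert (HPI := PI_RGT_0).
  assert (Hk : 0 < Rpower 2 S - 1).
  { assert (H1 := Rpower_lt 2 0 S ltac:(lra) HS). rewrite Rpower_O in H1 by lra. lra. }
  assert (Hg : 0 < Gamma fc c N0 eta0 eta1 a b hn).
  { rewrite Gamma_eq by auto. apply RInt_gt_0; [lra| |].
    - intros; apply Ff_pos; auto; lra.
    - intros; apply Ff_cont; auto. }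
  unfold Rstar.
  remember (Rpower 2 S - 1) as k eqn:Heqk.
  remember (Gamma fc c N0 eta0 eta1 a b hn) as g eqn:Heqg.
  set (s := sqrt (lam * k * Pc * g)).
  assert (Hs0 : 0 <= s) by apply sqrt_pos.
  assert (Hs2 : s * s = lam * k * Pc * g).
  { apply sqrt_sqrt. repeat apply Rmult_le_pos; lra. }
  split.
  - intros Rad h HR Hh. unfold Phi. rewrite Pt_scale by auto. rewrite <- Heqk.
    assert (HG : g <= Gamma fc c N0 eta0 eta1 a b (h / Rad)).
    { apply Hmin. apply Rmult_le_pos; [lra| left; apply Rinv_0_lt_compat; lra]. }
    set (G' := Gamma fc c N0 eta0 eta1 a b (h / Rad)) in *.
    assert (Ht : 0 < Rad^2) by (apply pow_lt; lra).
    set (t := Rad^2) in *.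
    replace (Rad^4) with (t^2) by (unfold t; ring).
    replace (A / (PI * t) * ((lam * k * t ^ 2 * G' + Pc) / Eb))
      with ((A / (PI * Eb * t)) * (lam * k * t^2 * G' + Pc))
      by (field; repeat split; lra).
    replace (2 * A / (PI * Eb) * s) with ((A / (PI * Eb * t)) * (2 * s * t))
      by (field; repeat split; lra).
    apply Rle_ge, Rmult_le_compat_l.
    + apply Rlt_le, Rdiv_lt_0_compat; [lra|]. apply Rmult_lt_0_compat; [apply Rmult_lt_0_compat|]; lra.
    + assert (E : (s*t - Pc)^2 = Pc * (lam*k*t^2*g + Pc - 2*s*t)).
      { replace ((s*t-Pc)^2) with ((s*s)*t^2 - 2*s*t*Pc + Pc^2) by ring.
        rewrite Hs2. ring. }
      assert (0 <= Pc * (lam*k*t^2*g + Pc - 2*s*t)) by (rewrite <- E; apply pow2_ge_0).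
      assert (0 <= lam*k*t^2*g + Pc - 2*s*t).
      { destruct (Rle_or_lt 0 (lam*k*t^2*g + Pc - 2*s*t)); auto. nra. }
      assert (0 <= lam*k*t^2*(G' - g)).
      { apply Rmult_le_pos; [|lra]. apply Rmult_le_pos; [nra| apply pow2_ge_0]. }
      nra.
  - set (q := Pc / (lam * k * g)).
    assert (Hq : 0 < q) by (unfold q; apply Rdiv_lt_0_compat; [lra|];
                            repeat apply Rmult_lt_0_compat; lra).
    set (Rs := Rpower q (1/4)).
    assert (HRs : 0 < Rs) by (unfold Rs, Rpower; apply exp_pos).
    assert (HR4 : Rs^4 = q).
    { rewrite <- (Rpower_pow 4 Rs HRs). unfold Rs. rewrite Rpower_mult.
      replace (1/4 * INR 4) with 1 by (simpl; field). apply Rpower_1; auto. }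
    unfold Phi. rewrite Pt_scale by auto.
    rewrite <- Heqk.
    replace (Rs * hn / Rs) with hn by (field; lra). rewrite <- Heqg.
    assert (Ht : 0 < Rs^2) by (apply pow_lt; lra).
    set (t := Rs^2) in *.
    assert (Ht2 : t^2 = q) by (unfold t; rewrite <- HR4; ring).
    assert (Hst : s = Pc / t).
    { unfold s. replace (lam * k * Pc * g) with ((Pc/t)^2).
      - apply sqrt_pow2. apply Rlt_le, Rdiv_lt_0_compat; lra.
      - replace ((Pc/t)^2) with (Pc^2 / t^2) by (field; lra). rewrite Ht2.
        unfold q. field. repeat split; lra. }
    rewrite Hst, HR4.
    replace (A / (PI * t) * ((lam * k * q * g + Pc) / Eb))
      with (A / (PI * t) * ((2 * Pc) / Eb)).
    + field. repeat split; lra.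
    + f_equal. f_equal. unfold q. field. repeat split; lra.
Qed.
Theorem theorem1
  (fc c N0 eta0 eta1 a b : R)
  (Hfc : 0 < fc) (Hc : 0 < c) (HN0 : 0 < N0) (Heta0 : 0 < eta0)
  (Heta1 : 0 < eta1) (Ha : 0 < a) (Hb : 0 < b)
  (Eb Pc S hn : R)
  (HEb : 0 < Eb) (HPc : 0 < Pc) (HS : 0 < S) (Hhn : 0 <= hn)
  (Hmin : forall x, 0 <= x ->
     Gamma fc c N0 eta0 eta1 a b hn <= Gamma fc c N0 eta0 eta1 a b x) :
  (* single subregion: lower bound and its attainment *)
  (forall A lam, 0 < A -> 0 < lam ->
     (forall Rad h, 0 < Rad -> 0 <= h ->
        Phi fc c N0 eta0 eta1 a b A Eb Pc lam S Rad h
        >= 2 * A / (PI * Eb)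
           * sqrt (lam * (Rpower 2 S - 1) * Pc * Gamma fc c N0 eta0 eta1 a b hn))
     /\
     Phi fc c N0 eta0 eta1 a b A Eb Pc lam S
         (Rstar fc c N0 eta0 eta1 a b Pc lam S hn)
         (Rstar fc c N0 eta0 eta1 a b Pc lam S hn * hn)
     = 2 * A / (PI * Eb)
       * sqrt (lam * (Rpower 2 S - 1) * Pc * Gamma fc c N0 eta0 eta1 a b hn))
  /\
  (* several subregions beta = 0, ..., kappa-1 *)
  (forall (kappa : nat) (Ab lamb : nat -> R),
     (forall i, (i < kappa)%nat -> 0 < Ab i /\ 0 < lamb i) ->
     (forall i, (i < kappa)%nat -> 0 < Rstar fc c N0 eta0 eta1 a b Pc (lamb i) S hn) /\
     forall (Rb hb : nat -> R),
       (forall i, (i < kappa)%nat -> 0 < Rb i /\ 0 <= hb i) ->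
       rsum (fun i => Phi fc c N0 eta0 eta1 a b (Ab i) Eb Pc (lamb i) S
                          (Rstar fc c N0 eta0 eta1 a b Pc (lamb i) S hn)
                          (Rstar fc c N0 eta0 eta1 a b Pc (lamb i) S hn * hn)) kappa
       <= rsum (fun i => Phi fc c N0 eta0 eta1 a b (Ab i) Eb Pc (lamb i) S
                          (Rb i) (hb i)) kappa).
Proof.
  split.
  - exact (single fc c N0 eta0 eta1 a b Hfc Hc HN0 Heta0 Heta1 Ha Hb Eb Pc S hn HEb HPc HS Hhn Hmin).
  - intros kappa Ab lamb Hpos. split.
    + intros i Hi. unfold Rstar, Rpower. apply exp_pos.
    + intros Rb hb HRb. revert Hpos HRb. induction kappa as [|n IH]; intros Hpos HRb; simpl; [lra|].
      apply Rplus_le_compat.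
      * apply IH; intros; [apply Hpos | apply HRb]; lia.
      * destruct (Hpos n) as [HA Hl]; [lia|]. destruct (HRb n) as [HR Hh]; [lia|].
        destruct (single fc c N0 eta0 eta1 a b Hfc Hc HN0 Heta0 Heta1 Ha Hb Eb Pc S hn HEb HPc HS Hhn Hmin (Ab n) (lamb n) HA Hl) as [H1 H2].
        rewrite H2. apply Rge_le, H1; auto.
Qed.
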